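(* Let $H=\big(\frac{S_k}{z^k}+\cdots+\frac{S_1}{z}+S_0+N_0\big)\frac{dz}{z}$ be an unramified HTL normal form of rank $n$ with spectral type $(\mathbf{m}_0\le_{\phi_0}\mathbf{m}_1\le_{\phi_1}\cdots\le_{\phi_{k-1}}\mathbf{m}_k,\ \sigma(\mathbf{m}_0))$. Let $\mathcal{I}\colon I_0,I_1,\dots,I_r$ be a partition of $\{0,1,\dots,k\}$ with $0\in I_0$, write $I_j=\{i_{[j,0]}<i_{[j,1]}<\cdots<i_{[j,k_j]}\}$, and let $\mathsf{c}=(c_0,\dots,c_r)\in\mathbb{C}^{r+1}$ have pairwise distinct entries and satisfy $\iota_{\mathcal{I}}(\mathsf{c})\in\mathbb{D}(H)$. Write the partial fraction decomposition $H(\iota_{\mathcal{I}}(\mathsf{c}))=\sum_{j=0}^r H_{\mathcal{I}}(\mathsf{c})_{z_{c_j}}$ with $H_{\mathcal{I}}(\mathsf{c})_{z_{c_j}}=\sum_{\nu=0}^{k_j}\frac{A^{[j]}_\nu}{z_{c_j}^{\nu+1}}dz_{c_j}$, $z_{c_j}=z-c_j$, $A^{[j]}_\nu\in M_n(\mathbb{C})$. Then each $H_{\mathcal{I}}(\mathsf{c})_{z_{c_j}}$ is an unramified HTL normal form, with spectral type \[(\mathbf{m}_{i_{[j,0]}}\le_{\phi_{i_{[j,0]}}^{i_{[j,1]}}}\mathbf{m}_{i_{[j,1]}}\le\cdots\le_{\phi^{i_{[j,k_j]}}_{i_{[j,k_j-1]}}}\mathbf{m}_{i_{[j,k_j]}},\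 \mathrm{triv})\quad (j=1,\dots,r),\] and \[(\mathbf{m}_{i_{[0,0]}}\le_{\phi_{i_{[0,0]}}^{i_{[0,1]}}}\mathbf{m}_{i_{[0,1]}}\le\cdots\le_{\phi^{i_{[0,k_0]}}_{i_{[0,k_0-1]}}}\mathbf{m}_{i_{[0,k_0]}},\ \sigma(\mathbf{m}_0))\quad (j=0).\]
   Context: An unramified HTL normal form is $H=\big(\sum_{i=1}^k S_iz^{-i}+S_0+N_0\big)\frac{dz}{z}$ with $S_i\in M_n(\mathbb{C})$ diagonal and $N_0$ nilpotent commuting with all $S_i$. Spectral type: for $i=0,\dots,k$ let $\mathbb{C}^n=\bigoplus_{j=1}^{m(i)}V_{\langle i,j\rangle}$ be the decomposition into simultaneous eigenspaces of $(S_i,S_{i+1},\dots,S_k)$ and $\mathbf{m}_i=(\dim V_{\langle i,1\rangle},\dots,\dim V_{\langle i,m(i)\rangle})$; $\phi_i\colon\{1,\dots,m(i)\}\to\{1,\dots,m(i+1)\}$ is the map with $V_{\langle i+1,j\rangle}=\bigoplus_{\mu\in\phi_i^{-1}(j)}V_{\langle i,\mu\rangle}$, and for $i<i'$, $\phi_i^{i'}=\phi_{i'-1}\circ\cdots\circ\phi_i$ (the refinement map from $\mathbf{m}_i$ to $\mathbf{m}_{i'}$). The signature $\sigma(\mathbf{m}_0)$ is the family, over $j=1,\dots,m(0)$, of sequences $(\dim V_{\langle0,j\rangle},\dim\mathrm{Im}N_j,\dim\mathrm{Im}N_j^2,\dots,\dim\mathrm{Im}N_j^{d_j-1})$ where $N_j=N_0|_{V_{\langle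 0,j\rangle}}$ and $N_j^{d_j}=0\neq N_j^{d_j-1}$; ''triv'' means the signature of a nilpotent part $0$. The spectral type is $(\mathbf{m}_0\le_{\phi_0}\cdots\le_{\phi_{k-1}}\mathbf{m}_k,\sigma(\mathbf{m}_0))$. Unfolding: for $\mathbf{c}=(c_0,\dots,c_k)\in\mathbb{C}^{k+1}$, $H(\mathbf{c})=\big(\frac{S_k}{(z-c_1)\cdots(z-c_k)}+\cdots+\frac{S_1}{z-c_1}+S_0+N_0\big)\frac{dz}{z-c_0}$. The set $\mathbb{D}(H)$: let $s^{(l)}_{\langle i,j\rangle}$ be the eigenvalue of $S_l$ on $V_{\langle i,j\rangle}$ ($i\le l\le k$); for $j\neq j'$ let $t=t_i(j,j')$ be the largest $l\in\{i,\dots,k\}$ with $s^{(l)}_{\langle i,j\rangle}\ne s^{(l)}_{\langle i,j'\rangle}$, and put $\alpha^*_{i;j,j'}(x_0,\dots,x_k)=\sum_{l=i}^{t}(s^{(l)}_{\langle i,j\rangle}-s^{(l)}_{\langle i,j'\rangle})\prod_{l<\nu\le t}(x_i-x_\nu)$. Then $\mathbb{D}(H)=\mathbb{C}^{k+1}\setminus\bigcup_{i=0}^{k-1}\bigcup_{1\le j<j'\le m(i)}\{\alpha^*_{i;j,j'}=0\}$. For the partition $\mathcal{I}$, $\iota_{\mathcal{I}}\colon\mathbb{C}^{r+1}\to\mathbb{C}^{k+1}$ sends $(a_0,\dots,a_r)$ to the vector whose $i$-th entry is $a_l$ for $i\in I_l$. *)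

(* Defs.v *)
From HB Require Import structures.
From mathcomp Require Import all_boot all_order all_algebra.
From mathcomp Require Import reals.
From mathcomp Require Export complex.
Import GRing.Theory.
Local Open Scope ring_scope.

Section HTL.
Context {C : fieldType} {n : nat}.

(* (S_0,...,S_k, N_0) is an unramified HTL normal form
   (S_k z^-k + ... + S_1 z^-1 + S_0 + N_0) dz/z :
   S_i diagonal, N_0 nilpotent, N_0 commuting with every S_i. *)
Definition is_HTL (k : nat) (S : nat -> 'M[C]_n) (N : 'M[C]_n) : Prop :=
  [/\ forall i, (i <= k)%N -> is_diag_mx (S i),
      exists d : nat, N ^+ d = 0
    & forall i, (i <= k)%N -> S i *m N = N *m S i].

(* Coordinates p, q lie in the same simultaneous eigenspace of
   (S_i, S_{i+1}, ..., S_k) (the S_l being diagonal). *)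
Definition eqlev (k : nat) (S : nat -> 'M[C]_n) (i : nat) (p q : 'I_n) : bool :=
  [forall l : 'I_k.+1, (i <= l)%N ==> (S l p p == S l q q)].

Definition blk (k : nat) (S : nat -> 'M[C]_n) (i : nat) (p : 'I_n) : {set 'I_n} :=
  [set q | eqlev k S i p q].

Definition blocks (k : nat) (S : nat -> 'M[C]_n) (i : nat) : {set {set 'I_n}} :=
  [set blk k S i p | p : 'I_n].

Definition up_blk (k : nat) (S : nat -> 'M[C]_n) (i' : nat) (B : {set 'I_n}) :
  {set 'I_n} := \bigcup_(p in B) blk k S i' p.

Definition proj (B : {set 'I_n}) : 'M[C]_n :=
  diag_mx (\row_(p < n) (p \in B)%:R).

Definition imdim (N : 'M[C]_n) (B : {set 'I_n}) (e : nat) : nat :=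
  \rank (N ^+ e *m proj B).

(* signature sequence (dim V_B, dim Im N_B, ..., dim Im N_B^(d-1)),
   N_B^d = 0 <> N_B^(d-1). *)
Definition sigseq (N : 'M[C]_n) (B : {set 'I_n}) : seq nat :=
  take (find (fun e => imdim N B e == 0%N) (iota 0 n.+1))
       [seq imdim N B e | e <- iota 0 n.+1].

Definition tlev (k : nat) (S : nat -> 'M[C]_n) (i : nat) (p q : 'I_n) : nat :=
  \max_(l < k.+1 | (i <= l)%N && (S l p p != S l q q)) (l : nat).

Definition alpha (k : nat) (S : nat -> 'M[C]_n) (i : 'I_k.+1) (p q : 'I_n)
  (x : 'I_k.+1 -> C) : C :=
  let t := tlev k S i p q in
  \sum_(l < k.+1 | (i <= l <= t)%N)
     (S l p p - S l q q) * \prod_(nu < k.+1 | (l < nu <= t)%N) (x i - x nu).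

Definition inD (k : nat) (S : nat -> 'M[C]_n) (x : 'I_k.+1 -> C) : Prop :=
  forall (i : 'I_k.+1), (i < k)%N -> forall p q : 'I_n,
    ~~ eqlev k S i p q -> alpha k S i p q x != 0.

(* The unfolded form H(x) divided by dz, evaluated at z:
   sum_{l=0}^k S_l / ((z-x_0)...(z-x_l)) + N_0/(z-x_0). *)
Definition Hunf (k : nat) (S : nat -> 'M[C]_n) (N : 'M[C]_n)
  (x : 'I_k.+1 -> C) (z : C) : 'M[C]_n :=
  \sum_(l < k.+1) (\prod_(m < k.+1 | (m <= l)%N) (z - x m))^-1 *: S l
  + (z - x ord0)^-1 *: N.

(* Spectral-type data with labels = the blocks (simultaneous eigenspaces,
   as coordinate sets); the dimension of a label B is #|B|. *)
Record stype := STy {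
  st_len : nat;
  st_lv  : nat -> {set {set 'I_n}};
  st_phi : nat -> {set 'I_n} -> {set 'I_n};
  st_sig : {set 'I_n} -> seq nat }.

(* Equality of spectral types (up to renumbering of the eigenspaces). *)
Definition st_iso (T1 T2 : stype) : Prop :=
  st_len T1 = st_len T2 /\
  exists beta : nat -> {set 'I_n} -> {set 'I_n},
    [/\ forall i, (i <= st_len T1)%N ->
          {in st_lv T1 i &, injective (beta i)} /\
          [set beta i B | B in st_lv T1 i] = st_lv T2 i,
        forall i, (i <= st_len T1)%N -> forall B, B \in st_lv T1 i ->
          #|beta i B| = #|B|,
        forall i, (i < st_len T1)%N -> forall B, B \in st_lv T1 i ->
          st_phi T2 i (beta i B) = beta i.+1 (st_phi T1 i B)
      & forall B, B \in st_lv T1 0 -> st_sig T2 (beta 0 B) = st_sig T1 B].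

Definition spec_type (k : nat) (S : nat -> 'M[C]_n) (N : 'M[C]_n) : stype :=
  @STy k (blocks k S) (fun i => up_blk k S i.+1) (sigseq N).

(* Partition I_0,...,I_r of {0..k} given by part : 'I_k.+1 -> 'I_r.+1
   (I_j = part^-1(j)); I_j listed increasingly. *)
Definition Ilist (k r : nat) (part : 'I_k.+1 -> 'I_r.+1) (j : 'I_r.+1) : seq nat :=
  [seq (val i) | i <- enum 'I_k.+1 & part i == j].

Definition kj (k r : nat) (part : 'I_k.+1 -> 'I_r.+1) (j : 'I_r.+1) : nat :=
  (size (Ilist k r part j)).-1.

Definition ii (k r : nat) (part : 'I_k.+1 -> 'I_r.+1) (j : 'I_r.+1) (nu : nat) : nat :=
  nth 0%N (Ilist k r part j) nu.

Definition iotaI (k r : nat) (part : 'I_k.+1 -> 'I_r.+1) (c : 'I_r.+1 -> C) :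
  'I_k.+1 -> C := fun i => c (part i).

Definition target_type (k r : nat) (S : nat -> 'M[C]_n) (N : 'M[C]_n)
  (part : 'I_k.+1 -> 'I_r.+1) (j : 'I_r.+1) : stype :=
  @STy (kj k r part j)
      (fun nu => blocks k S (ii k r part j nu))
      (fun nu => up_blk k S (ii k r part j nu.+1))
      (if j == ord0 then sigseq N else sigseq 0).

End HTL.

(* Main.v *)
Require Import Defs.
From HB Require Import structures.
From mathcomp Require Import all_boot all_order all_algebra.
From mathcomp Require Import reals complex.
From mathcomp Require Import zify ring.
Import GRing.Theory Num.Theory.
Local Open Scope ring_scope.


Lemma poly_eq0_all (C : numFieldType) (p : {poly C}) :
  (forall z, p.[z] = 0) -> p = 0.
Proof.
move=> h; apply: (@roots_geq_poly_eq0 _ p [seq i%:R | i <- iota 0 (size p)]).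
- by apply/allP => x /mapP [i _ ->]; rewrite /root h.
- rewrite map_inj_uniq ?iota_uniq // => a b /eqP; rewrite eqr_nat => /eqP.
  done.
- by rewrite size_map size_iota.
Qed.

Lemma nth_filter_iota (P : pred nat) n nu :
  (nu < size (filter P (iota 0 n)))%N ->
  [/\ (nth 0%N (filter P (iota 0 n)) nu < n)%N,
      P (nth 0%N (filter P (iota 0 n)) nu)
    & count P (iota 0 (nth 0%N (filter P (iota 0 n)) nu)) = nu].
Proof.
elim: n nu => [|n IH] nu; first by [].
rewrite -[n.+1]addn1 iotaD filter_cat /= add0n size_cat nth_cat.
have [lt _|ge] := ltnP nu (size (filter P (iota 0 n))).
  by have [h1 h2 h3] := IH _ lt; split=> //; apply: ltn_addr.
case Pn: (P n) => /=; last by rewrite addn0 ltnNge ge.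
rewrite addn1 ltnS => le; have e : nu = size (filter P (iota 0 n)).
  by apply/eqP; rewrite eqn_leq le ge.
by rewrite e subnn /= addn1 ltnSn Pn size_filter.
Qed.

Lemma count_iota_mono (P : pred nat) a b : (a <= b)%N ->
  (count P (iota 0 a) <= count P (iota 0 b))%N.
Proof.
move=> ab; rewrite -(subnKC ab) iotaD count_cat; exact: leq_addr.
Qed.

Lemma count_iotaS (P : pred nat) a :
  count P (iota 0 a.+1) = (count P (iota 0 a) + P a)%N.
Proof. by rewrite -addn1 iotaD count_cat /= add0n addn0. Qed.

Lemma card_ordP k (Q : pred nat) : #|[pred m : 'I_k | Q m]| = count Q (iota 0 k).
Proof.
rewrite -val_enum_ord count_map cardE /enum_mem size_filter.
by rewrite /enum_mem filter_predT; apply: eq_count.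
Qed.

Section Comb.
Variables (k r : nat) (part : 'I_k.+1 -> 'I_r.+1).
Hypothesis surj : forall j, exists i, part i = j.

Definition Pj (j : 'I_r.+1) : pred nat := fun m => part (inord m) == j.
Definition cl j a := count (Pj j) (iota 0 a).

Lemma Ilist_eq j : Ilist k r part j = filter (Pj j) (iota 0 k.+1).
Proof.
rewrite /Ilist -val_enum_ord filter_map; congr map; apply: eq_filter => i.
by rewrite /= /Pj inord_val.
Qed.

Lemma K_eq j : cl j k.+1 = (kj k r part j).+1.
Proof.
rewrite /kj Ilist_eq size_filter prednK //; have [i <-] := surj j.
rewrite -has_count; apply/hasP; exists (val i); first by rewrite mem_iota /=.
by rewrite /Pj inord_val.
Qed.

Lemma ii_props j nu : (nu <= kj k r part j)%N ->
  [/\ (ii k r part j nu < k.+1)%N, Pj j (ii k r part j nu)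
    & cl j (ii k r part j nu) = nu].
Proof.
move=> le; rewrite /ii Ilist_eq; apply: nth_filter_iota.
by rewrite size_filter -/(cl j k.+1) K_eq.
Qed.

Lemma cardG j (l : nat) : (l <= k)%N ->
  #|[pred m : 'I_k.+1 | (l < m)%N && (part m == j)]| = ((kj k r part j).+1 - cl j l.+1)%N.
Proof.
move=> lk.
have -> : #|[pred m : 'I_k.+1 | (l < m)%N && (part m == j)]| =
    count (fun m => (l < m)%N && Pj j m) (iota 0 k.+1).
  by rewrite -card_ordP; apply: eq_card => m; rewrite !inE /Pj inord_val.
rewrite -K_eq /cl -(subnKC lk) -addSn !iotaD !count_cat add0n.
rewrite (eq_in_count (a1 := fun m => (l < m)%N && Pj j m) (a2 := pred0)); last first.
  by move=> m; rewrite mem_iota add0n ltnS => /andP [_ h]; rewrite /= ltnNge h.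
rewrite count_pred0 add0n (eq_in_count (a1 := fun m => (l < m)%N && Pj j m) (a2 := Pj j)).
  by rewrite addKn.
by move=> m; rewrite mem_iota => /andP [-> _].
Qed.

Lemma cl_mono j a b : (a <= b)%N -> (cl j a <= cl j b)%N.
Proof. exact: count_iota_mono. Qed.

Lemma clS j a : cl j a.+1 = (cl j a + Pj j a)%N.
Proof. exact: count_iotaS. Qed.

End Comb.

Section Tri.
Variable C : fieldType.

Lemma tri2 (kj nu0 : nat) (b rho : nat -> C) : (nu0 <= kj)%N ->
  (forall nu, (nu0 < nu <= kj)%N -> b nu = 0) ->
  \sum_(nu < kj.+1) b nu * (if (kj - nu0 < kj - nu)%N then 0 else rho (kj - nu0 - (kj - nu))%N)
  = b nu0 * rho 0%N.
Proof.
move=> le hb; rewrite (bigD1 (Ordinal (leq_ltn_trans le (ltnSn kj)))) //= ltnn subnn.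
rewrite big1 ?addr0 // => nu neq.
have [lt|gt|eq] := ltngtP nu nu0.
- by rewrite ifT ?mulr0 // ltn_sub2l // (leq_trans lt le).
- by rewrite hb ?mul0r // gt -ltnS ltn_ord.
- by move: neq; rewrite -val_eqE /= eq eqxx.
Qed.

Lemma tri (kj : nat) (b rho v : nat -> C) : rho 0%N != 0 ->
  (forall m, (m <= kj)%N -> v m = \sum_(nu < kj.+1) b nu *
      (if (m < kj - nu)%N then 0 else rho (m - (kj - nu))%N)) ->
  forall M, (forall m, (m < M)%N -> v m = 0) ->
  forall nu, (kj.+1 - M <= nu <= kj)%N -> b nu = 0.
Proof.
move=> r0 hv; elim=> [|M IH] hM nu /andP [h1 h2].
  by move: (leq_trans h1 h2); rewrite subn0 ltnn.
have [h3|h3] := leqP (kj.+1 - M) nu.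
  by apply: IH => [m lt|]; [apply: hM; apply: ltnW | rewrite h3 h2].
have eM : M = (kj - nu)%N by lia.
have hb : forall nu', (nu < nu' <= kj)%N -> b nu' = 0.
  by move=> nu' /andP [a1 a2]; apply: IH => [m lt|]; [apply: hM; apply: ltnW | apply/andP; split => //; lia].
have := hM M (ltnSn M); rewrite hv; last by lia.
rewrite eM tri2 // => /eqP; rewrite mulf_eq0 (negbTE r0) orbF => /eqP //.
Qed.
End Tri.


Lemma coef_compZ (C : numFieldType) (a : C) (p q : {poly C}) m :
  ((a *: p) \Po q)`_m = a * (p \Po q)`_m.
Proof. by rewrite comp_polyZ coefZ. Qed.

Section Poly.
Variables (C : numFieldType) (k r : nat) (part : 'I_k.+1 -> 'I_r.+1) (c : 'I_r.+1 -> C).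

Definition PP (pr : pred 'I_k.+1) : {poly C} :=
  \prod_(m | pr m) ('X - (c (part m))%:P).
Definition tau j (p : {poly C}) := p \Po ('X + (c j)%:P).
Definition cntg j (pr : pred 'I_k.+1) := #|[pred m | pr m && (part m == j)]|.

Lemma tauPP j pr : tau j (PP pr) =
  'X^(cntg j pr) * \prod_(m | pr m && (part m != j)) ('X + (c j - c (part m))%:P).
Proof.
rewrite /tau /PP rmorph_prod (bigID (fun m => part m == j)) /=.
congr (_ * _).
  rewrite (eq_bigr (fun _ => 'X)); last first.
    move=> m /andP [_ /eqP ->].
    by rewrite comp_polyB comp_polyX comp_polyC addrK.
  by rewrite prodr_const /cntg; congr (_ ^+ _); apply: eq_card.
apply: eq_bigr => m _.
by rewrite comp_polyB comp_polyX comp_polyC polyCB addrA.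
Qed.

Lemma coef_tauPPM_lt j pr (Q : {poly C}) m : (m < cntg j pr)%N ->
  (tau j (Q * PP pr))`_m = 0.
Proof.
move=> lt; rewrite /tau comp_polyM -/(tau j (PP pr)) tauPP mulrCA coefXnM.
by rewrite lt.
Qed.

Lemma coef_tauPP_lt j pr m : (m < cntg j pr)%N -> (tau j (PP pr))`_m = 0.
Proof. by move=> lt; rewrite -[PP pr]mul1r coef_tauPPM_lt. Qed.

Lemma coef_tauPP_eq j pr : (tau j (PP pr))`_(cntg j pr) =
  \prod_(m | pr m && (part m != j)) (c j - c (part m)).
Proof.
rewrite tauPP coefXnM ltnn subnn -horner_coef0 horner_prod.
by apply: eq_bigr => m _; rewrite hornerD hornerX hornerC add0r.
Qed.

Lemma tau_XsubCM j e (Q : {poly C}) :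
  tau j (('X - (c j)%:P) ^+ e * Q) = 'X^e * tau j Q.
Proof.
by rewrite /tau comp_polyM rmorphXn /= comp_polyB comp_polyX comp_polyC addrK.
Qed.

Hypothesis surj : forall j, exists i, part i = j.

Lemma cardK j : #|[pred m : 'I_k.+1 | part m == j]| = (kj k r part j).+1.
Proof.
rewrite -K_eq // /cl -card_ordP; apply: eq_card => m.
by rewrite !inE /Pj inord_val.
Qed.

Variables (s : 'I_k.+1 -> C) (a : 'I_r.+1 -> nat -> C).

Definition LP := \sum_(l < k.+1) s l *: PP (fun m => (l < m)%N).
Definition RP := \sum_(j < r.+1) \sum_(nu < (kj k r part j).+1)
   a j nu *: (('X - (c j)%:P) ^+ (kj k r part j - nu) * PP (fun m => part m != j)).
Definition Qz z := \prod_(m < k.+1) (z - c (part m)).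

Lemma evPP pr z : (PP pr).[z] = \prod_(m | pr m) (z - c (part m)).
Proof. by rewrite horner_prod; apply: eq_bigr => m _; rewrite hornerXsubC. Qed.

Lemma evLP z : (forall j, z != c j) ->
  LP.[z] = Qz z * \sum_(l < k.+1) (\prod_(m < k.+1 | (m <= l)%N) (z - c (part m)))^-1 * s l.
Proof.
move=> hz; rewrite horner_sum mulr_sumr; apply: eq_bigr => l _.
rewrite hornerZ evPP mulrA [RHS]mulrC; congr (_ * _).
rewrite /Qz [\prod_(m < k.+1) _](bigID (fun m : 'I_k.+1 => (m <= l)%N)) /= mulrAC divff ?mul1r.
  by apply: eq_bigl => m; rewrite ltnNge.
by apply/prodf_neq0 => m _; rewrite subr_eq0; exact: hz.
Qed.

Lemma evRP z : (forall j, z != c j) ->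
  RP.[z] = Qz z * \sum_(j < r.+1) \sum_(nu < (kj k r part j).+1) ((z - c j) ^+ nu.+1)^-1 * a j nu.
Proof.
move=> hz; rewrite horner_sum mulr_sumr; apply: eq_bigr => j _.
rewrite horner_sum mulr_sumr; apply: eq_bigr => nu _.
rewrite hornerZ hornerM horner_exp hornerXsubC evPP.
have HQ : Qz z = (z - c j) ^+ (kj k r part j - nu) * (z - c j) ^+ nu.+1 *
    \prod_(m | part m != j) (z - c (part m)).
  rewrite /Qz (bigID (fun m : 'I_k.+1 => part m == j)) /=.
  rewrite (eq_bigr (fun _ => z - c j)); last by move=> m /eqP ->.
  by rewrite prodr_const cardK -exprD addnS subnK // -ltnS.
rewrite HQ; set V := ((z - c j) ^+ nu.+1)^-1.
have hv : (z - c j) ^+ nu.+1 * V = 1 by rewrite divff // expf_neq0 // subr_eq0.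
transitivity (a j nu * ((z - c j) ^+ (kj k r part j - nu) *
   \prod_(m | part m != j) (z - c (part m))) * ((z - c j) ^+ nu.+1 * V)).
  by rewrite hv mulr1.
ring.
Qed.

Lemma LP_RP : (forall z, (forall j, z != c j) ->
  \sum_(l < k.+1) (\prod_(m < k.+1 | (m <= l)%N) (z - c (part m)))^-1 * s l =
  \sum_(j < r.+1) \sum_(nu < (kj k r part j).+1) ((z - c j) ^+ nu.+1)^-1 * a j nu) ->
  LP = RP.
Proof.
move=> hid.
have : (LP - RP) * \prod_(j < r.+1) ('X - (c j)%:P) = 0.
  apply: poly_eq0_all => z; rewrite hornerM horner_prod.
  have [hz|] := boolP [forall j, z != c j].
    have hz' : forall j, z != c j by move=> j; apply: (forallP hz).
    by rewrite hornerD hornerN evLP // evRP // hid // subrr mul0r.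
  rewrite negb_forall => /existsP [j]; rewrite negbK => /eqP ->.
  apply/eqP; rewrite mulf_eq0; apply/orP; right; apply/prodf_eq0.
  by exists j => //; rewrite hornerXsubC subrr.
move/eqP; rewrite mulf_eq0 subr_eq0 => /orP [/eqP //|].
move/prodf_eq0 => [j _]; by rewrite polyXsubC_eq0.
Qed.


Notation kjj j := (kj k r part j).

Lemma coefLP j m : (tau j LP)`_m =
  \sum_(l < k.+1) s l * (tau j (PP (fun m => (l < m)%N)))`_m.
Proof.
rewrite /tau /LP rmorph_sum coef_sum; apply: eq_bigr => l _.
by rewrite coef_compZ.
Qed.

Definition rho j d := (tau j (PP (fun m => part m != j)))`_d.

Lemma coefRP j m : (m <= kjj j)%N -> (tau j RP)`_m =
  \sum_(nu < (kjj j).+1) a j nu *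
     (if (m < kjj j - nu)%N then 0 else rho j (m - (kjj j - nu))%N).
Proof.
move=> lem; rewrite /tau /RP rmorph_sum coef_sum (bigD1 j) //= [X in _ + X]big1 ?addr0.
  rewrite rmorph_sum coef_sum; apply: eq_bigr => nu _.
  by rewrite coef_compZ -/(tau _ _) tau_XsubCM coefXnM.
move=> j' nj; rewrite rmorph_sum coef_sum big1 // => nu _.
rewrite coef_compZ -/(tau _ _) coef_tauPPM_lt ?mulr0 //.
rewrite /cntg (eq_card (B := [pred m | part m == j])); first by rewrite cardK.
move=> m'; rewrite !inE; case: (eqVneq (part m') j) => [->|_]; last by rewrite andbF.
by rewrite andbT eq_sym.
Qed.

Hypothesis cinj : injective c.

Lemma rho0 j : rho j 0 = \prod_(m | part m != j) (c j - c (part m)).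
Proof.
have e : cntg j (fun m => part m != j) = 0%N.
  by apply: eq_card0 => m; rewrite !inE; case: eqP.
rewrite /rho -e coef_tauPP_eq; apply: eq_bigl => m; by rewrite andbb.
Qed.

Lemma rho0_neq0 j : rho j 0 != 0.
Proof.
rewrite rho0; apply/prodf_neq0 => m h; rewrite subr_eq0.
by apply: contra h => /eqP /cinj ->.
Qed.

Hypothesis hid : LP = RP.

Lemma locA j nu :
  (forall l : 'I_k.+1, s l != 0%R -> (kjj j).+1 - nu <= cntg j (fun m => (l < m)%N))%N ->
  forall nu', (nu <= nu' <= kjj j)%N -> a j nu' = 0.
Proof.
move=> hs nu' hnu'.
apply: (@tri _ (kjj j) (a j) (rho j) (fun m => (tau j LP)`_m) (rho0_neq0 j)
          _ ((kjj j).+1 - nu)%N); last by rewrite subKn //; lia.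
  by move=> m lem; rewrite hid coefRP.
move=> m lt; rewrite coefLP big1 // => l _.
have [->|nz] := eqVneq (s l) 0; first by rewrite mul0r.
rewrite coef_tauPP_lt ?mulr0 //; exact: (leq_trans lt (hs l nz)).
Qed.

Lemma locB j nu0 : (nu0 <= kjj j)%N ->
  (forall l : 'I_k.+1, s l != 0%R -> (kjj j - nu0 <= cntg j (fun m => (l < m)%N))%N) ->
  a j nu0 * rho j 0 = \sum_(l < k.+1 | cntg j (fun m => (l < m)%N) == (kjj j - nu0)%N)
     s l * \prod_(m : 'I_k.+1 | (l < m)%N && (part m != j)) (c j - c (part m)).
Proof.
move=> le hs.
have hb : forall nu, (nu0 < nu <= kjj j)%N -> a j nu = 0.
  by apply: (locA j nu0.+1) => l /hs; rewrite subSS.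
rewrite -(@tri2 _ _ _ (a j) (rho j) le hb) -coefRP ?leq_subr // -hid coefLP [RHS]big_mkcond /=.
apply: eq_bigr => l _; case: eqP => [<-|ne]; first by rewrite coef_tauPP_eq.
have [->|nz] := eqVneq (s l) 0; first by rewrite mul0r.
rewrite coef_tauPP_lt ?mulr0 // ltn_neqAle (hs l nz) andbT.
by apply/eqP => e; apply: ne; rewrite e.
Qed.

End Poly.


Section Main.
Variables (C : numFieldType) (n k r : nat) (S : nat -> 'M[C]_n) (N : 'M[C]_n)
  (part : 'I_k.+1 -> 'I_r.+1) (c : 'I_r.+1 -> C) (A : 'I_r.+1 -> nat -> 'M[C]_n).
Hypothesis hHTL : is_HTL k S N.
Hypothesis surj : forall j : 'I_r.+1, exists i : 'I_k.+1, part i = j.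
Hypothesis part0 : part ord0 = ord0.
Hypothesis cinj : injective c.
Hypothesis hD : inD k S (iotaI k r part c).
Hypothesis hA : forall z : C, (forall j, z != c j) ->
     Hunf k S N (iotaI k r part c) z =
     \sum_(j < r.+1) \sum_(nu < (kj k r part j).+1) ((z - c j) ^+ nu.+1)^-1 *: A j nu.

Notation kjj j := (kj k r part j).

Definition A' j nu := A j nu - (if (j == ord0) && (nu == 0%N) then N else 0).

Lemma idA' z : (forall j, z != c j) ->
  \sum_(l < k.+1) (\prod_(m < k.+1 | (m <= l)%N) (z - c (part m)))^-1 *: S l =
  \sum_(j < r.+1) \sum_(nu < (kjj j).+1) ((z - c j) ^+ nu.+1)^-1 *: A' j nu.
Proof.
move=> hz; have := hA z hz; rewrite /Hunf /iotaI => e.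
have hN : \sum_(j < r.+1) \sum_(nu < (kjj j).+1) ((z - c j) ^+ nu.+1)^-1 *:
    (if (j == ord0) && (nat_of_ord nu == 0%N) then N else 0) = (z - c ord0)^-1 *: N.
  rewrite (bigD1 ord0) //= [X in _ + X]big1 ?addr0; last first.
    by move=> j nj; apply: big1 => nu _; rewrite (negbTE nj) scaler0.
  by rewrite big_ord_recl /= expr1 big1 ?addr0 // => nu _; rewrite scaler0.
have -> : \sum_(j < r.+1) \sum_(nu < (kjj j).+1) ((z - c j) ^+ nu.+1)^-1 *: A' j nu =
   \sum_(j < r.+1) \sum_(nu < (kjj j).+1) ((z - c j) ^+ nu.+1)^-1 *: A j nu -
   \sum_(j < r.+1) \sum_(nu < (kjj j).+1) ((z - c j) ^+ nu.+1)^-1 *: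
    (if (j == ord0) && (nat_of_ord nu == 0%N) then N else 0).
  rewrite -sumrB; apply: eq_bigr => j _; rewrite -sumrB; apply: eq_bigr => nu _.
  by rewrite scalerBr.
by rewrite hN -e part0 addrK.
Qed.

Lemma idE (p q : 'I_n) z : (forall j, z != c j) ->
  \sum_(l < k.+1) (\prod_(m < k.+1 | (m <= l)%N) (z - c (part m)))^-1 * S l p q =
  \sum_(j < r.+1) \sum_(nu < (kjj j).+1) ((z - c j) ^+ nu.+1)^-1 * A' j nu p q.
Proof.
move=> hz; have := congr1 (fun M : 'M_n => M p q) (idA' z hz); rewrite /= !summxE => e.
transitivity (\sum_(l < k.+1)
  ((\prod_(m < k.+1 | (m <= l)%N) (z - c (part m)))^-1 *: S l) p q).
  by apply: eq_bigr => l _; rewrite mxE.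
rewrite e; apply: eq_bigr => j _; rewrite summxE; apply: eq_bigr => nu _.
by rewrite mxE.
Qed.

Lemma hid_entry (p q : 'I_n) :
  LP C k r part c (fun l => S l p q) = RP C k r part c (fun j nu => A' j nu p q).
Proof. by apply: LP_RP => // z hz; apply: idE. Qed.

Lemma hid_diff (p q : 'I_n) :
  LP C k r part c (fun l => S l p p - S l q q) =
  RP C k r part c (fun j nu => A' j nu p p - A' j nu q q).
Proof.
apply: LP_RP => // z hz.
under eq_bigr do rewrite mulrBr.
rewrite sumrB (idE p p z hz) (idE q q z hz) -sumrB; apply: eq_bigr => j _; rewrite -sumrB.
by apply: eq_bigr => nu _; rewrite mulrBr.
Qed.


Lemma mul_diag_l (D M : 'M[C]_n) (p q : 'I_n) : is_diag_mx D ->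
  (D *m M) p q = D p p * M p q.
Proof.
move=> hd; rewrite mxE (bigD1 p) //= big1 ?addr0 // => i ni.
by rewrite (is_diag_mxP hd) ?mul0r // val_eqE eq_sym.
Qed.

Lemma mul_diag_r (D M : 'M[C]_n) (p q : 'I_n) : is_diag_mx D ->
  (M *m D) p q = M p q * D q q.
Proof.
move=> hd; rewrite mxE (bigD1 q) //= big1 ?addr0 // => i ni.
by rewrite (is_diag_mxP hd) ?mulr0 // val_eqE.
Qed.

Lemma S_diag (l : 'I_k.+1) : is_diag_mx (S l).
Proof. by have [hd _ _] := hHTL; apply: hd; rewrite -ltnS. Qed.

Lemma A'_offdiag j nu (p q : 'I_n) : (nu <= kjj j)%N -> p != q -> A' j nu p q = 0.
Proof.
move=> hnu npq.
apply: (@locA _ _ _ _ _ surj _ _ cinj (hid_entry p q) j 0%N) => [l|]; last by rewrite leq0n.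
by rewrite (is_diag_mxP (S_diag l)) ?eqxx // val_eqE.
Qed.

Lemma A'_eq_of j nu (p q : 'I_n) :
  (forall l : 'I_k.+1, S l p p - S l q q != 0 ->
     ((kjj j).+1 - nu <= cntg k r part j (fun m => (l < m)%N))%N) ->
  forall nu', (nu <= nu' <= kjj j)%N -> A' j nu' p p = A' j nu' q q.
Proof.
move=> h nu' hnu'; apply/eqP; rewrite -subr_eq0; apply/eqP.
exact: (@locA _ _ _ _ _ surj _ _ cinj (hid_diff p q) j nu h).
Qed.

Lemma comm_eq (p q : 'I_n) : N p q != 0 -> forall l : 'I_k.+1, S l p p = S l q q.
Proof.
move=> nz l; have [_ _ hc] := hHTL.
have := congr1 (fun M : 'M_n => M p q) (hc l (leq_ord l)).
rewrite /= mul_diag_l ?mul_diag_r ?S_diag // [RHS]mulrC => /eqP.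
by rewrite -subr_eq0 -mulrBl mulf_eq0 (negbTE nz) orbF subr_eq0 => /eqP.
Qed.

Lemma tlev_props i (p q : 'I_n) (l0 : 'I_k.+1) : (i <= l0)%N -> S l0 p p != S l0 q q ->
  exists T : 'I_k.+1, [/\ val T = tlev k S i p q, (i <= T)%N, S T p p != S T q q
    & forall l : 'I_k.+1, (i <= l)%N -> S l p p != S l q q -> (l <= T)%N].
Proof.
move=> h1 h2.
have hc : (0 < #|[pred l : 'I_k.+1 | (i <= l)%N && (S l p p != S l q q)]|)%N.
  by apply/card_gt0P; exists l0; rewrite inE h1 h2.
have [T hT e] := eq_bigmax_cond (fun l : 'I_k.+1 => val l) hc.
move: hT; rewrite inE => /andP [hT1 hT2].
have e' : tlev k S i p q =
    \max_(i0 in [pred l : 'I_k.+1 | (i <= l)%N && (S l p p != S l q q)]) val i0.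
  by rewrite /tlev; apply: eq_bigl => l; rewrite inE.
exists T; split => //; last first.
move=> l hl1 hl2; rewrite -e -e'.
rewrite /tlev; apply: (leq_bigmax_cond (F := fun l : 'I_k.+1 => val l)).
by rewrite hl1 hl2.
Qed.


Lemma sum_alpha j (p q : 'I_n) (I T : 'I_k.+1) (g : nat) :
  part I = j -> (I <= T)%N ->
  (forall l : 'I_k.+1, S l p p - S l q q != 0 -> (l <= T)%N) ->
  (forall l : 'I_k.+1, (l <= T)%N ->
     (cntg k r part j (fun m => (l < m)%N) == g) = (I <= l)%N) ->
  (forall l m : 'I_k.+1, (I <= l)%N -> (l < m <= T)%N -> part m != j) ->
  tlev k S I p q = T ->
  \sum_(l < k.+1 | cntg k r part j (fun m => (l < m)%N) == g)
     (S l p p - S l q q) * \prod_(m : 'I_k.+1 | (l < m)%N && (part m != j)) (c j - c (part m))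
  = alpha k S I p q (iotaI k r part c) *
    \prod_(m : 'I_k.+1 | (T < m)%N && (part m != j)) (c j - c (part m)).
Proof.
move=> hpI hIT hsT h1 h2 ht.
rewrite /alpha /= ht /iotaI hpI mulr_suml.
transitivity (\sum_(l < k.+1 | (I <= l <= T)%N) (S l p p - S l q q) *
   \prod_(m : 'I_k.+1 | (l < m)%N && (part m != j)) (c j - c (part m))).
  rewrite [LHS]big_mkcond [RHS]big_mkcond; apply: eq_bigr => l _.
  case: (leqP l T) => hl; first by rewrite h1 // andbT.
  rewrite andbF; have [->|nz] := eqVneq (S l p p - S l q q) 0.
    by rewrite !mul0r if_same.
  by move: (hsT _ nz); rewrite leqNgt hl.
apply: eq_bigr => l /andP [hl1 hl2]; rewrite -mulrA; congr (_ * _).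
rewrite (bigID (fun m : 'I_k.+1 => (m <= T)%N)) /=; congr (_ * _).
  apply: eq_bigl => m; case: (ltnP l m) => hlm //=.
  case: (leqP m T) => hmT; rewrite ?andbT ?andbF //.
  by rewrite (h2 l m hl1) ?hlm ?hmT.
apply: eq_bigl => m; rewrite -ltnNge; case: (ltnP T m) => hTm; rewrite ?andbF ?andbT //.
by rewrite (leq_ltn_trans hl2 hTm).
Qed.


Lemma eqlev_equiv j nu (p q : 'I_n) : (nu <= kjj j)%N ->
  eqlev (kjj j) (A' j) nu p q = eqlev k S (ii k r part j nu) p q.
Proof.
move=> hnu.
have [hik hPi hcli] := @ii_props k r part surj j nu hnu.
set i := ii k r part j nu in hik hPi hcli *.
have hK := @K_eq k r part surj j.
have hcg : forall l : 'I_k.+1, cntg k r part j (fun m => (l < m)%N) =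
    ((kjj j).+1 - cl k r part j l.+1)%N.
  move=> l; have lk : (l <= k)%N by rewrite -ltnS.
  by rewrite -(@cardG k r part surj j l lk).
have mono := cl_mono k r part j.
apply/idP/idP => [hS'|hS]; last first.
  apply/forallP => l; apply/implyP => hl; apply/eqP.
  apply: (A'_eq_of j nu p q) => [l' hl'|]; last by rewrite hl -ltnS ltn_ord.
  rewrite hcg; have hl'i : (l' < i)%N.
    rewrite ltnNge; apply/negP => hil.
    move/forallP: hS => /(_ l'); rewrite hil /= => /eqP e.
    by move: hl'; rewrite e subrr eqxx.
  have := mono l'.+1 i hl'i; rewrite hcli; lia.
apply/negPn/negP => hn.
move/forallPn: hn => [l0]; rewrite negb_imply => /andP [h1 h2].
have [T [eT hiT hsT hmax]] := tlev_props i p q l0 h1 h2.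
have hsle : forall l : 'I_k.+1, S l p p - S l q q != 0 -> (l <= T)%N.
  move=> l; rewrite subr_eq0 => hl; case: (leqP i l) => h; first exact: hmax.
  exact: (leq_trans (ltnW h) hiT).
set cT := cl k r part j T.+1.
have hc1 : (nu < cT)%N.
  have := mono i.+1 T.+1 hiT; rewrite clS hcli hPi addn1; done.
have hc2 : (cT <= (kjj j).+1)%N by rewrite -hK; apply: mono; exact: ltn_ord T.
set nus := cT.-1.
have hnus : (nus <= kjj j)%N by lia.
have [hIk hPI hclI] := @ii_props k r part surj j nus hnus.
set I : 'I_k.+1 := Ordinal hIk.
have hpI : part I = j.
  move: hPI; rewrite /Pj => /eqP <-; congr part; apply: val_inj.
  by rewrite /= inordK.
have hclI1 : cl k r part j I.+1 = cT.
  rewrite /= clS hclI hPI addn1; lia.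
have hIT : (I <= T)%N.
  rewrite leqNgt; apply/negP => lt; have := mono T.+1 I lt; rewrite /= hclI; lia.
have hB := @locB C k r part c surj (fun l => S l p p - S l q q)
  (fun j nu => A' j nu p p - A' j nu q q) cinj (hid_diff p q) j nus hnus.
have {}hB := hB (fun l hl => ltac:(rewrite hcg; have := mono l.+1 T.+1 (hsle l hl); lia)).
have ht : tlev k S I p q = T.
  have [T' [eT' hIT' hsT' hmax']] := tlev_props I p q T hIT hsT.
  rewrite -eT'; apply/eqP; rewrite eqn_leq; apply/andP; split.
    by apply: hsle; rewrite subr_eq0.
  exact: hmax' T hIT hsT.
rewrite (@sum_alpha j p q I T) // in hB; last first.
- move=> l m hIl /andP [hlm hmT]; apply/negP => /eqP hpm.
  have hPm : Pj k r part j m by rewrite /Pj inord_val hpm eqxx.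
  have := mono I.+1 l.+1 hIl; have := mono l.+1 m hlm; have := mono m.+1 T.+1 hmT.
  rewrite hclI1 clS hPm; lia.
- move=> l hl; rewrite hcg; have m1 := mono l.+1 T.+1 hl.
  apply/eqP/idP => [e|hIl].
    rewrite leqNgt; apply/negP => lt; have := mono l.+1 I lt; rewrite /= hclI; lia.
  have := mono I.+1 l.+1 hIl; rewrite hclI1; lia.
have halpha : alpha k S I p q (iotaI k r part c) != 0.
  case: (ltnP I k) => hIk'.
    apply: hD => //; apply/forallPn; exists T; by rewrite negb_imply hIT hsT.
  have eIT : I = T.
    apply: val_inj; apply/eqP; rewrite eqn_leq hIT /=.
    by apply: (leq_trans _ hIk'); rewrite -ltnS.
  rewrite /alpha /= ht (bigD1 T) /=; last by rewrite -eIT !leqnn.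
  have -> : \prod_(m < k.+1 | (T < m <= T)%N)
      (iotaI k r part c I - iotaI k r part c m) = 1.
    by rewrite big_pred0 // => m; rewrite ltnNge andNb.
  rewrite mulr1 big1 ?addr0 ?subr_eq0 //.
  move=> l /andP [/andP [a b] nl]; exfalso; move/negP: nl; apply.
  apply/eqP/val_inj/eqP; rewrite eqn_leq b -eIT; exact: a.
have hW : \prod_(m : 'I_k.+1 | (T < m)%N && (part m != j)) (c j - c (part m)) != 0.
  apply/prodf_neq0 => m /andP [_ hm]; rewrite subr_eq0.
  by apply: contra hm => /eqP /cinj ->.
have hnn : (nu <= nus)%N by lia.
have hnus1 : (nus < (kjj j).+1)%N by rewrite ltnS.
move/forallP: hS' => /(_ (Ordinal hnus1)); rewrite /= hnn => /eqP e.
move: hB; rewrite e subrr mul0r => /esym /eqP; rewrite mulf_eq0.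
by rewrite (negbTE halpha) (negbTE hW).
Qed.


Lemma A'_diag j nu : (nu <= kjj j)%N -> is_diag_mx (A' j nu).
Proof.
move=> hnu; apply/is_diag_mxP => p q npq; apply: A'_offdiag => //.
Qed.

Lemma blk_eq j i (p : 'I_n) : (i <= kjj j)%N ->
  blk (kjj j) (A' j) i p = blk k S (ii k r part j i) p.
Proof. by move=> hi; apply/setP => q; rewrite !inE eqlev_equiv. Qed.

Lemma final j : exists (S' : nat -> 'M[C]_n) (N' : 'M[C]_n),
      [/\ is_HTL (kj k r part j) S' N',
          A j 0%N = S' 0%N + N',
          (forall nu, (1 <= nu <= kj k r part j)%N -> A j nu = S' nu)
        & st_iso (spec_type (kj k r part j) S' N') (target_type k r S N part j)].
Proof.
exists (A' j), (if j == ord0 then N else 0); split.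
- split.
  + by move=> nu hnu; apply: A'_diag.
  + case: eqP => _; last by exists 1%N; rewrite expr1.
    by have [_ [d hd] _] := hHTL; exists d.
  + move=> nu hnu; case: eqP => _; last by rewrite mulmx0 mul0mx.
    apply/matrixP => p q; rewrite mul_diag_l ?mul_diag_r ?A'_diag //.
    have [->|nz] := eqVneq (N p q) 0; first by rewrite mulr0 mul0r.
    rewrite (A'_eq_of j 0 p q); first by rewrite mulrC.
      by move=> l; rewrite (comm_eq p q nz l) subrr eqxx.
    by rewrite leq0n hnu.
- by rewrite /A' /= andbT subrK.
- move=> nu /andP [h1 h2]; rewrite /A'.
  have -> : (nu == 0%N) = false by case: nu h1 h2.
  by rewrite andbF subr0.
- split; first by [].
  exists (fun _ B => B); split.
  + move=> i hi; split; first by move=> B1 B2 _ _.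
    rewrite imset_id /= /blocks; apply: eq_imset => p; exact: blk_eq.
  + by [].
  + move=> i hi B _ /=; rewrite /up_blk; apply: eq_bigr => p _.
    by rewrite blk_eq.
  + by move=> B _ /=; case: (j == ord0).
Qed.

End Main.

Theorem mainTheorem2 (R : realType) (n k r : nat)
  (S : nat -> 'M[R[i]]_n) (N : 'M[R[i]]_n)
  (part : 'I_k.+1 -> 'I_r.+1) (c : 'I_r.+1 -> R[i])
  (A : 'I_r.+1 -> nat -> 'M[R[i]]_n) :
  is_HTL k S N ->
  (forall j : 'I_r.+1, exists i : 'I_k.+1, part i = j) ->
  part ord0 = ord0 ->
  injective c ->
  inD k S (iotaI k r part c) ->
  (forall z : R[i], (forall j, z != c j) ->
     Hunf k S N (iotaI k r part c) z =
     \sum_(j < r.+1) \sum_(nu < (kj k r part j).+1) ((z - c j) ^+ nu.+1)^-1 *: A j nu) ->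
  forall j : 'I_r.+1,
    exists (S' : nat -> 'M[R[i]]_n) (N' : 'M[R[i]]_n),
      [/\ is_HTL (kj k r part j) S' N',
          A j 0%N = S' 0%N + N',
          (forall nu, (1 <= nu <= kj k r part j)%N -> A j nu = S' nu)
        & st_iso (spec_type (kj k r part j) S' N') (target_type k r S N part j)].
Proof.
move=> hHTL surj part0 cinj hD hA j.
exact: (@final (R[i] : numFieldType) n k r S N part c A hHTL surj part0 cinj hD hA j).
Qed.
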